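(* Let $T\ge1$ and let $p$ be a $T$-period random joint choice rule on a finite set $X$. Then $p$ is consistent with state independent consumption dependent random utility if and only if it satisfies marginality, complete monotonicity, and choice set independence.
   Context: $\mathcal{X}$ is the set of nonempty subsets of $X$, $\mathcal{L}(X)$ the linear orders, $N(x,A)=\{\succ: x\succ y\ \forall y\in A\setminus\{x\}\}$. Notation: $\mathbf{x}^\tau=(x_1,\dots,x_\tau)$, $\mathbf{A}^\tau=(A_1,\dots,A_\tau)\in\mathcal{X}^\tau$, and $\mathbf{x}^\tau\in\mathbf{A}^\tau$ means $x_i\in A_i$ for all $i$. A $T$-period random joint choice rule assigns to each $\mathbf{A}^T\in\mathcal{X}^T$ and $\mathbf{x}^T\in\mathbf{A}^T$ a number $p(\mathbf{x}^T,\mathbf{A}^T)\ge0$ with $\sum_{\mathbf{x}^T\in\mathbf{A}^T}p(\mathbf{x}^T,\mathbf{A}^T)=1$. For $\tau<T$ define recursively $p(\mathbf{x}^\tau,\mathbf{A}^\tau)=\sum_{y\in X}p(\mathbf{x}^\tau,y,\mathbf{A}^\tau,X)$. Marginality: for all $\tau\in\{1,\dots,T-1\}$, $\mathbf{A}^\tau$, $\mathbf{x}^\tau\in\mathbf{A}^\tau$, $B,C\in\mathcal{X}$: $\sum_{y\in B}p(\mathbf{x}^\tau,y,\mathbf{A}^\tau,B)=\sum_{y\in C}p(\mathbf{x}^\tau,y,\mathbf{A}^\tau,C)$. The Möbius inverse $q$ is defined by $p(\mathbf{x}^T,\mathbf{A}^T)=\sum_{A_1\subseteq A_1'\subseteq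 X}\cdots\sum_{A_T\subseteq A_T'\subseteq X}q(\mathbf{x}^T,A_1',\dots,A_T')$; complete monotonicity means $q\ge0$ everywhere. Choice set independence: for each $\tau\in\{1,\dots,T-1\}$, each $B\in\mathcal{X}$ and $y\in B$, and each $\mathbf{A}^\tau,\mathbf{A}'^\tau$ with $\mathbf{x}^\tau\in\mathbf{A}^\tau\cap\mathbf{A}'^\tau$, $p(\mathbf{x}^\tau,\mathbf{A}^\tau)>0$, $p(\mathbf{x}^\tau,\mathbf{A}'^\tau)>0$: $\frac{p(\mathbf{x}^\tau,y,\mathbf{A}^\tau,B)}{p(\mathbf{x}^\tau,\mathbf{A}^\tau)}=\frac{p(\mathbf{x}^\tau,y,\mathbf{A}'^\tau,B)}{p(\mathbf{x}^\tau,\mathbf{A}'^\tau)}$. A state independent transition function of degree $n$ is a map $t^n:X^n\to\Delta(\mathcal{L}(X))$, with $t^n_{\succ'}(\cdot)$ the probability of $\succ'$. $p$ is consistent with state independent consumption dependent random utility if there exist $\nu\in\Delta(\mathcal{L}(X))$ and state independent transition functions $t^1,\dots,t^{T-1}$ ($t^n$ of degree $n$) with $p(\mathbf{x}^T,\mathbf{A}^T)=\sum_{\succ_1\in N(x_1,A_1)}\cdots\sum_{\succ_T\in N(x_T,A_T)}\nu(\succ_1)\prod_{\tau=2}^T t^{\tau-1}_{\succ_\tau}(\mathbf{x}^{\tau-1})$ for all $\mathbf{A}^T$, $\mathbf{x}^T\in\mathbf{A}^T$. *)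

(* Defs.v *)
From HB Require Import structures.
From mathcomp Require Import all_boot all_order all_algebra.
From mathcomp Require Import reals.
Set Implicit Arguments.
Unset Strict Implicit.
Unset Printing Implicit Defensive.
Import Order.TTheory GRing.Theory Num.Theory.
Local Open Scope ring_scope.

(* Linear orders on a finite set X, encoded as rankings: an injective (hence
   bijective) map f : X -> 'I_#|X|; x is preferred to y iff f x < f y.
   This is a bijective encoding of L(X). *)
Definition linord (X : finType) := {f : {ffun X -> 'I_#|X|} | injectiveb f}.

Definition prefers (X : finType) (o : linord X) (x y : X) : bool :=
  (val o x < val o y)%N.

Definition inN (X : finType) (o : linord X) (x : X) (A : {set X}) : bool :=
  [forall y in A, (y != x) ==> prefers o x y].

Definition in_dom (X : finType) (n : nat) (xs : seq X) (As : seq {set X}) : bool :=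
  [&& size xs == n, size As == n, all (fun A => A != set0) As
    & all2 (fun (x : X) (A : {set X}) => x \in A) xs As].

(* T-period random joint choice rule (p is only meaningful on sequences of length T) *)
Definition is_rjcr (R : realType) (X : finType) (T : nat)
    (p : seq X -> seq {set X} -> R) : Prop :=
  (forall xs As, in_dom T xs As -> 0 <= p xs As) /\
  (forall As : seq {set X}, size As = T -> all (fun A => A != set0) As ->
     \sum_(xs : T.-tuple X | all2 (fun (x : X) (A : {set X}) => x \in A) xs As) p xs As = 1).

Fixpoint pext (R : realType) (X : finType) (p : seq X -> seq {set X} -> R)
    (k : nat) (xs : seq X) (As : seq {set X}) : R :=
  match k with
  | 0 => p xs As
  | k'.+1 => \sum_(y : X) pext p k' (rcons xs y) (rcons As setT)
  end.

(* p(x^tau, A^tau) for tau <= T *)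
Definition pmarg (R : realType) (X : finType) (p : seq X -> seq {set X} -> R)
    (T tau : nat) (xs : seq X) (As : seq {set X}) : R :=
  pext p (T - tau) xs As.

Definition marginality (R : realType) (X : finType) (T : nat)
    (p : seq X -> seq {set X} -> R) : Prop :=
  forall tau : nat, (1 <= tau <= T - 1)%N ->
  forall (xs : seq X) (As : seq {set X}), in_dom tau xs As ->
  forall B C : {set X}, B != set0 -> C != set0 ->
    \sum_(y in B) pmarg p T tau.+1 (rcons xs y) (rcons As B)
    = \sum_(y in C) pmarg p T tau.+1 (rcons xs y) (rcons As C).

Definition complete_monotonicity (R : realType) (X : finType) (T : nat)
    (p : seq X -> seq {set X} -> R) : Prop :=
  exists q : seq X -> seq {set X} -> R,
    (forall xs As, in_dom T xs As ->
       p xs As = \sum_(Bs : T.-tuple {set X} | all2 (fun A B : {set X} => A \subset B) As Bs)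
                   q xs Bs) /\
    (forall xs As, in_dom T xs As -> 0 <= q xs As).

Definition choice_set_independence (R : realType) (X : finType) (T : nat)
    (p : seq X -> seq {set X} -> R) : Prop :=
  forall tau : nat, (1 <= tau <= T - 1)%N ->
  forall (B : {set X}) (y : X), y \in B ->
  forall (xs : seq X) (As As' : seq {set X}),
    in_dom tau xs As -> in_dom tau xs As' ->
    0 < pmarg p T tau xs As -> 0 < pmarg p T tau xs As' ->
    pmarg p T tau.+1 (rcons xs y) (rcons As B) / pmarg p T tau xs As
    = pmarg p T tau.+1 (rcons xs y) (rcons As' B) / pmarg p T tau xs As'.

Definition is_dist (R : realType) (X : finType) (mu : linord X -> R) : Prop :=
  (forall o, 0 <= mu o) /\ \sum_(o : linord X) mu o = 1.

Definition SICDRU (R : realType) (X : finType) (T : nat)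
    (p : seq X -> seq {set X} -> R) : Prop :=
  exists (nu : linord X -> R) (tr : nat -> seq X -> linord X -> R),
    is_dist nu /\
    (forall n : nat, (1 <= n <= T - 1)%N ->
       forall xs : seq X, size xs = n -> is_dist (tr n xs)) /\
    (forall xs As, in_dom T xs As ->
       p xs As =
       \sum_(os : T.-tuple (linord X) |
               all (fun t => inN t.2 t.1.1 t.1.2) (zip (zip xs As) os))
         \prod_(i < T)
            (if (i == 0 :> nat) then nu (tnth os i)
             else tr i (take i xs) (tnth os i))).

(* Main.v *)
Require Import Defs.
From HB Require Import structures.
From mathcomp Require Import all_boot all_order all_algebra.
From mathcomp Require Import reals.
From mathcomp Require Import zify.
Set Implicit Arguments.
Unset Strict Implicit.
Unset Printing Implicit Defensive.
Import Order.TTheory GRing.Theory Num.Theory.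
Local Open Scope ring_scope.


Fixpoint sumseq (R : realType) (J : finType) (n : nat) (F : seq J -> R) : R :=
  if n is n'.+1 then \sum_(j : J) sumseq n' (fun s => F (j :: s)) else F [::].

Lemma sumseq_ext (R : realType) (J : finType) n (F G : seq J -> R) :
  (forall s, size s = n -> F s = G s) -> sumseq n F = sumseq n G.
Proof.
elim: n F G => [|n IH] F G H /=; first by apply: H.
apply: eq_bigr => j _; apply: IH => s Hs; by apply: H; rewrite /= Hs.
Qed.

Lemma sumseq_sum (R : realType) (J : finType) (I : Type) (r : seq I) (P : pred I)
  n (F : I -> seq J -> R) :
  sumseq n (fun s => \sum_(i <- r | P i) F i s) = \sum_(i <- r | P i) sumseq n (F i).
Proof.
elim: n F => [|n IH] F //=.
under eq_bigr do rewrite IH.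
by rewrite exchange_big.
Qed.

Lemma sumseq_scale (R : realType) (J : finType) n (c : R) (F : seq J -> R) :
  sumseq n (fun s => c * F s) = c * sumseq n F.
Proof.
elim: n F => [|n IH] F //=.
under eq_bigr do rewrite IH.
by rewrite mulr_sumr.
Qed.

Lemma sumseq_ge0 (R : realType) (J : finType) n (F : seq J -> R) :
  (forall s, size s = n -> 0 <= F s) -> 0 <= sumseq n F.
Proof.
elim: n F => [|n IH] F H /=; first by apply: H.
apply: sumr_ge0 => j _; apply: IH => s Hs; by apply: H; rewrite /= Hs.
Qed.

Lemma sumseq_rcons (R : realType) (J : finType) n (F : seq J -> R) :
  sumseq n.+1 F = sumseq n (fun s => \sum_j F (rcons s j)).
Proof.
elim: n F => [|n IH] F //.
transitivity (\sum_j sumseq n.+1 (fun s => F (j :: s))); first by [].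
by apply: eq_bigr => j _; rewrite (IH (fun s => F (j :: s))).
Qed.

Lemma sumseq_cat (R : realType) (J : finType) m n (F : seq J -> R) :
  sumseq (m + n) F = sumseq m (fun s => sumseq n (fun t => F (s ++ t))).
Proof.
elim: m F => [|m IH] F; first by rewrite add0n.
rewrite addSn.
transitivity (\sum_j sumseq (m + n) (fun s => F (j :: s))); first by [].
by apply: eq_bigr => j _; rewrite (IH (fun s => F (j :: s))).
Qed.

Lemma tuple_sumseq (R : realType) (J : finType) n (F : seq J -> R) :
  \sum_(t : n.-tuple J) F t = sumseq n F.
Proof.
elim: n F => [|n IH] F /=.
  rewrite (big_pred1 [tuple]) // => t; symmetry; apply/eqP; exact: tuple0.
rewrite (reindex (fun p : J * n.-tuple J => [tuple of p.1 :: p.2])) /=.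
  rewrite -(pair_bigA _ (fun (j : J) (t : n.-tuple J) => F (j :: t))) /=.
  apply: eq_bigr => j _; by rewrite -IH.
exists (fun t : n.+1.-tuple J => (thead t, behead_tuple t)).
  by case=> j t _ /=; congr pair; apply: val_inj.
move=> t _; case: t => -[|a s] //= Hs; apply: val_inj => //=.
Qed.

Lemma tuple_sumseqP (R : realType) (J : finType) n (P : pred (seq J)) (F : seq J -> R) :
  \sum_(t : n.-tuple J | P t) F t = sumseq n (fun s => if P s then F s else 0).
Proof. rewrite big_mkcond; exact: (tuple_sumseq n (fun s => if P s then F s else 0)). Qed.

Lemma prod_if (R : realType) n (c : 'I_n -> bool) (a : 'I_n -> R) :
  \prod_(i < n) (if c i then a i else 0) = if [forall i, c i] then \prod_(i < n) a i else 0.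
Proof.
case: ifP => [/forallP H|/negP H].
  by apply: eq_bigr => i _; rewrite H.
have [i ci] : exists i, ~~ c i.
  by apply/existsP; rewrite -negb_forall; apply/negP.
by rewrite (bigD1 i) //= (negbTE ci) mul0r.
Qed.

Lemma sumseq_prod (R : realType) (J : finType) (j0 : J) n (P : nat -> pred J)
  (F : nat -> J -> R) :
  sumseq n (fun s => \prod_(i < n) (if P i (nth j0 s i) then F i (nth j0 s i) else 0))
  = \prod_(i < n) \sum_(j | P i j) F i j.
Proof.
elim: n => [|n IH]; first by rewrite /= !big_ord0.
rewrite sumseq_rcons [RHS]big_ord_recr /= -IH [RHS]mulrC -sumseq_scale.
apply: sumseq_ext => s Hs.
rewrite mulr_suml [RHS]big_mkcond; apply: eq_bigr => j _ /=.
rewrite big_ord_recr /= nth_rcons Hs ltnn eqxx.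
case: ifP => _; last by rewrite mulr0.
rewrite mulrC; congr (_ * _).
apply: eq_bigr => i _; by rewrite nth_rcons Hs ltn_ord.
Qed.


Definition mass (R : realType) (X : finType) (q : X -> {set X} -> R) (C : {set X}) : R :=
  \sum_(x in C) q x C.
Definition flow (R : realType) (X : finType) (q : X -> {set X} -> R) (C : {set X}) : R :=
  \sum_(y in ~: C) q y (y |: C).

Fixpoint chain (R : realType) (X : finType) (q : X -> {set X} -> R) (C : {set X}) (s : seq X) : R :=
  if s is z :: s' then q z C / mass q C * chain q (C :\ z) s' else 1.

Lemma chain_cat (R : realType) (X : finType) (q : X -> {set X} -> R) C s1 s2 :
  chain q C (s1 ++ s2) = chain q C s1 * chain q (C :\: [set:: s1]) s2.
Proof.
elim: s1 C => [|z s1 IH] C /=.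
  by rewrite mul1r set_nil setD0.
by rewrite IH mulrA set_cons setDDl.
Qed.

Lemma sum_indicator (R : realType) (I : finType) (P : pred I) (c : I) :
  \sum_(i | P i) ((i == c)%:R : R) = (P c)%:R.
Proof.
case Pc: (P c).
  rewrite (bigD1 c) //= eqxx big1 ?addr0 // => i /andP[_ /negbTE ->] //.
rewrite big1 // => i Pi; case: eqP => // ei; by rewrite ei Pc in Pi.
Qed.

Lemma mass_ge (R : realType) (X : finType) (q : X -> {set X} -> R) (C : {set X}) x :
  (forall y B, 0 <= q y B) -> x \in C -> q x C <= mass q C.
Proof.
move=> q0 xC; rewrite /mass (bigD1 x) //= lerDl; apply: sumr_ge0 => *; exact: q0.
Qed.

Lemma flow_sum (R : realType) (X : finType) (rho q : X -> {set X} -> R) :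
  (forall A : {set X}, A != set0 -> \sum_(x in A) rho x A = 1) ->
  (forall x (A : {set X}), x \in A -> rho x A = \sum_(B : {set X} | A \subset B) q x B) ->
  forall A : {set X}, A != set0 -> \sum_(C : {set X} | A \subset C) (mass q C - flow q C) = 1.
Proof.
move=> Hs Hq A A0.
rewrite -(Hs A A0).
under [RHS]eq_bigr => x xA do rewrite (Hq x A xA).
rewrite exchange_big /= sumrB.
have E1 : forall C : {set X}, A \subset C -> mass q C = \sum_(x in A) q x C + \sum_(x in C | x \notin A) q x C.
  move=> C HAC; rewrite /mass (bigID (fun x => x \in A)) /=; congr (_ + _).
  apply: eq_bigl => x; apply/andP/idP => [[]//|xA]; split=> //; exact: (subsetP HAC).
rewrite (eq_bigr _ E1).
rewrite big_split /= -addrA -[RHS]addr0; congr (_ + _); apply/eqP; rewrite subr_eq0; apply/eqP.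
rewrite /flow.
transitivity (\sum_x \sum_(C : {set X} | A \subset C) (if (x \in C) && (x \notin A) then q x C else 0)).
  rewrite exchange_big; apply: eq_bigr => C HAC; by rewrite big_mkcond.
transitivity (\sum_x \sum_(C : {set X} | A \subset C) (if (x \notin C) then q x (x |: C) else 0));
  last first.
  rewrite exchange_big; apply: eq_bigr => C HAC; rewrite [RHS]big_mkcond; apply: eq_bigr => x _.
  by rewrite inE.
apply: eq_bigr => x _.
case xA: (x \in A) => /=.
  rewrite big1; last by move=> *; rewrite andbF.
  rewrite big1 // => C HAC; by rewrite (subsetP HAC x xA).
rewrite -!big_mkcondr /=.
rewrite (reindex_onto (fun D : {set X} => x |: D) (fun C : {set X} => C :\ x)) /=; last first.
  by move=> C /and3P[_ xC _]; rewrite setD1K.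
apply: eq_bigl => D.
rewrite setU11 !andbT.
case xD: (x \in D).
  rewrite andbF; apply/negbTE/negP => /andP[_ /eqP E]; move: xD; by rewrite -E setD11.
rewrite setU1K ?xD // eqxx !andbT.
apply/idP/idP => H; apply/subsetP => y yA.
  move: (subsetP H y yA); rewrite in_setU1 => /orP[/eqP Ey|//]; by move: yA; rewrite Ey xA.
by rewrite in_setU1 (subsetP H y yA) orbT.
Qed.

Lemma upper_inv (R : realType) (X : finType) (h : {set X} -> R) :
  (forall A : {set X}, A != set0 -> \sum_(C : {set X} | A \subset C) h C = 1) ->
  forall A : {set X}, A != set0 -> h A = (A == setT)%:R.
Proof.
move=> H.
suff S : forall k (A : {set X}), (#|~: A| < k)%N -> A != set0 -> h A = (A == setT)%:R.
  by move=> A; apply: (S (#|~: A|).+1).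
elim=> [//|k IH] A Ak A0.
have := H A A0; rewrite (bigD1 A) //=.
rewrite (eq_bigr (fun C => (C == setT)%:R)); last first.
  move=> C /andP[HAC CA]; apply: IH.
    have P : A \proper C by rewrite properEneq eq_sym CA.
    have := proper_card P; have := cardsC A; have := cardsC C; lia.
  apply: contraNneq A0 => C0; by rewrite -subset0 -C0.
rewrite sum_indicator subsetT /= eq_sym.
case: eqP => [_|_] /=; first by rewrite addr0.
by move=> E; rewrite -(addrK 1 (h A)) E subrr.
Qed.

Lemma sumseq_0 (R : realType) (J : finType) n : sumseq n (fun _ : seq J => 0 : R) = 0.
Proof.
transitivity (sumseq n (fun s : seq J => (0:R) * 0)).
  by apply: sumseq_ext => s _; rewrite mul0r.
by rewrite sumseq_scale mul0r.
Qed.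

Lemma sumseq_scaler (R : realType) (J : finType) n (c : R) (F : seq J -> R) :
  sumseq n (fun s => F s * c) = sumseq n F * c.
Proof.
by rewrite mulrC -sumseq_scale; apply: sumseq_ext => s _; rewrite mulrC.
Qed.

Lemma mul_divK (R : realType) (a b : R) : 0 <= a -> a <= b -> b * (a / b) = a.
Proof.
move=> a0 ab; case: (b =P 0) => [b0|/eqP bn].
  by move: ab; rewrite b0 mul0r => ab; apply/eqP; rewrite eq_le a0 ab.
by rewrite mulrC divfK.
Qed.

Lemma flow_id (R : realType) (X : finType) (rho q : X -> {set X} -> R) (x0 : X) :
  (forall A : {set X}, A != set0 -> \sum_(x in A) rho x A = 1) ->
  (forall x (A : {set X}), x \in A -> rho x A = \sum_(B : {set X} | A \subset B) q x B) ->
  mass q setT = 1 /\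
  (forall B : {set X}, B != set0 -> B != setT -> mass q B = flow q B).
Proof.
move=> Hs Hq.
have H := upper_inv (flow_sum Hs Hq).
have T0 : [set: X] != set0 by apply/set0Pn; exists x0.
split.
  have F0 : flow q setT = 0 by rewrite /flow big1 // => y; rewrite !inE.
  by have := H _ T0; rewrite eqxx F0 subr0.
move=> B B0 BT; have := H _ B0; rewrite (negbTE BT) => /eqP; by rewrite subr_eq0 => /eqP.
Qed.

Lemma set_full (X : finType) (s : seq X) (B : {set X}) :
  uniq s -> all (fun y => y \notin B) s -> size s = #|~: B| -> [set:: s] = ~: B.
Proof.
move=> us al sz; apply/eqP; rewrite eqEcard; apply/andP; split.
  apply/subsetP => y; rewrite !inE => ys; exact: (allP al y ys).
by rewrite -sz cardsE (card_uniqP us).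
Qed.

Lemma all_notin_U1 (X : finType) (s : seq X) (z : X) (B : {set X}) :
  all (fun y => y \notin z |: B) s = (z \notin s) && all (fun y => y \notin B) s.
Proof.
elim: s => //= a s ->; rewrite in_setU1 in_cons negb_or negb_or eq_sym.
by rewrite !andbA; congr (_ && _); rewrite andbAC.
Qed.

Lemma all_in_D1 (X : finType) (s : seq X) (z : X) (C : {set X}) :
  all (fun y => y \in C :\ z) s = (z \notin s) && all (fun y => y \in C) s.
Proof.
elim: s => //= a s ->; rewrite in_setD1 in_cons negb_or eq_sym.
by rewrite !andbA; congr (_ && _); rewrite andbAC.
Qed.

Lemma reach (R : realType) (X : finType) (q : X -> {set X} -> R) :
  (forall y B, 0 <= q y B) -> mass q setT = 1 ->
  (forall B : {set X}, B != set0 -> B != setT -> mass q B = flow q B) ->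
  forall k (B : {set X}), B != set0 -> #|~: B| = k ->
  sumseq k (fun s => if uniq s && all (fun y => y \notin B) s then chain q setT s else 0)
  = mass q B.
Proof.
move=> q0 mT mF; elim=> [|k IH] B B0 Bk.
  by rewrite -[B]setCK (cards0_eq Bk) setC0 /= mT.
have BT : B != setT.
  by apply/eqP => E; move: Bk; rewrite E setCT cards0.
rewrite sumseq_rcons sumseq_sum.
transitivity (\sum_z (if z \in ~: B then q z (z |: B) else 0)); last first.
  by rewrite (mF B B0 BT) /flow [RHS]big_mkcond.
apply: eq_bigr => z _.
case zB: (z \in ~: B); last first.
  transitivity (sumseq k (fun _ : seq X => 0 : R)); last by rewrite sumseq_0.
  apply: sumseq_ext => s _; rewrite rcons_uniq all_rcons.
  by move: zB; rewrite inE => /negbFE ->; rewrite /= andbF.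
have zB' : z \notin B by rewrite inE in zB.
have ck : #|~: (z |: B)| = k.
  move: Bk; rewrite (cardsD1 z) zB setCU setIC -setDE => /eqP; rewrite eqSS => /eqP.
  by [].
transitivity (sumseq k (fun s => (if uniq s && all (fun y => y \notin z |: B) s
     then chain q setT s else 0) * (q z (z |: B) / mass q (z |: B)))).
  apply: sumseq_ext => s sz.
  rewrite rcons_uniq all_rcons all_notin_U1 zB' /=.
  case zs: (z \in s) => /=; first by rewrite andbF mul0r.
  case H: (uniq s && all (fun y => y \notin B) s); last by rewrite mul0r.
  move/andP: H => [us al].
  rewrite -cats1 chain_cat /= setTD (@set_full _ s (z |: B)) ?setCK ?mulr1 //.
  - by rewrite all_notin_U1 zs al.
  - by rewrite sz ck.
rewrite sumseq_scaler IH //; last by apply/set0Pn; exists z; rewrite setU11.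
apply: mul_divK; first exact: q0.
apply: mass_ge => //; exact: setU11.
Qed.

Lemma completion (R : realType) (X : finType) (q : X -> {set X} -> R) :
  (forall y B, 0 <= q y B) ->
  (forall B : {set X}, B != set0 -> B != setT -> mass q B = flow q B) ->
  forall k (C : {set X}), #|C| = k -> (C = set0 \/ 0 < mass q C) ->
  sumseq k (fun s => if uniq s && all (fun y => y \in C) s then chain q C s else 0) = 1.
Proof.
move=> q0 mF; elim=> [|k IH] C Ck HC; first by [].
have mpos : 0 < mass q C.
  by case: HC => [C0|//]; rewrite C0 cards0 in Ck.
transitivity (\sum_z sumseq k (fun s => if uniq (z :: s) && all (fun y => y \in C) (z :: s)
   then chain q C (z :: s) else 0)); first by [].
transitivity (\sum_z (if z \in C then q z C / mass q C else 0)); last first.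
  by rewrite -big_mkcond /= -mulr_suml divff // gt_eqF.
apply: eq_bigr => z _.
case zC: (z \in C); last first.
  transitivity (sumseq k (fun _ : seq X => 0 : R)); last by rewrite sumseq_0.
  by apply: sumseq_ext => s _ /=; rewrite zC /= andbF.
transitivity (sumseq k (fun s => q z C / mass q C *
  (if uniq s && all (fun y => y \in C :\ z) s then chain q (C :\ z) s else 0))).
  apply: sumseq_ext => s sz /=.
  rewrite zC all_in_D1 /=.
  case zs: (z \in s) => /=; first by rewrite andbF mulr0.
  by case: ifP; rewrite ?mulr0.
rewrite sumseq_scale.
case: (q z C =P 0) => [->|qn]; first by rewrite !mul0r.
rewrite IH ?mulr1 //.
  by move: Ck; rewrite (cardsD1 z) zC add1n => -[].
case: (C :\ z =P set0) => [->|/eqP Cn]; [by left | right].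
have qp : 0 < q z C by rewrite lt_def q0 andbT; apply/eqP.
rewrite mF //; last by apply/negP => /eqP E; have := in_setT z; rewrite -E setD11.
apply: (lt_le_trans qp).
rewrite /flow (bigD1 z) /=; last by rewrite !inE eqxx.
rewrite setD1K // lerDl; apply: sumr_ge0 => *; exact: q0.
Qed.


Definition remx (X : finType) (s : seq X) (x : X) : {set X} :=
  [set y | (index x s <= index y s)%N].

Lemma remx_cat (X : finType) (s1 s2 : seq X) x :
  x \notin s1 -> remx (s1 ++ x :: s2) x = ~: [set:: s1].
Proof.
move=> xs1; apply/setP => y; rewrite !inE !index_cat (negbTE xs1) /= eqxx addn0.
case ys: (y \in s1) => /=.
  by rewrite leqNgt index_mem ys.
exact: leq_addr.
Qed.

Lemma full_mem (X : finType) (s : seq X) y : uniq s -> size s = #|X| -> y \in s.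
Proof.
move=> us sz.
have C : #|[set:: s]| = #|X| by rewrite cardsE (card_uniqP us).
have : #|~: [set:: s]| = 0%N by have := cardsC [set:: s]; rewrite C; lia.
move/cards0_eq/setP/(_ y); rewrite !inE => /negbFE; by [].
Qed.

Lemma remx_index (X : finType) (s : seq X) x :
  uniq s -> size s = #|X| -> #|~: remx s x| = index x s.
Proof.
move=> us sz.
have -> : ~: remx s x = [set:: take (index x s) s].
  by apply/setP => y; rewrite !inE -ltnNge in_take ?full_mem.
rewrite cardsE (card_uniqP (take_uniq _ us)) size_take index_mem full_mem //.
Qed.

Lemma split_claim (X : finType) (s1 s2 : seq X) z x (B : {set X}) :
  x \in B -> size s1 = #|~: B| -> size s2 = #|B|.-1 ->
  (uniq (s1 ++ z :: s2) && (remx (s1 ++ z :: s2) x == B)) =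
  [&& z == x, uniq s1 && all (fun y => y \notin B) s1
    & uniq s2 && all (fun y => y \in B :\ x) s2].
Proof.
move=> xB sz1 sz2.
have B0 : (0 < #|B|)%N by apply/card_gt0P; exists x.
have szs : size (s1 ++ z :: s2) = #|X|.
  by rewrite size_cat /= sz1 sz2 prednK // addnC cardsC.
apply/andP/and3P.
- case=> us /eqP rB.
  have ix : index x (s1 ++ z :: s2) = size s1 by rewrite sz1 -rB remx_index.
  have zx : z = x.
    have := nth_index x (full_mem x us szs); by rewrite ix nth_cat ltnn subnn.
  subst z.
  have xs1 : x \notin s1.
    apply/negP => xs1; move: ix; rewrite index_cat xs1 => E.
    by have := index_mem x s1; rewrite xs1 E ltnn.
  move: rB; rewrite remx_cat // => rB.
  move: us; rewrite cat_uniq /= => /and3P[u1 /norP[_ h2] /andP[x2 u2]].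
  split => //; apply/andP; split => //.
    by apply/allP => y ys; rewrite -rB !inE ys.
  apply/allP => y ys; rewrite in_setD1 -rB !inE.
  apply/andP; split; first by apply: contraNneq x2 => <-.
  by move/hasPn: h2 => /(_ y ys).
- case=> /eqP -> /andP[u1 a1] /andP[u2 a2].
  have xs1 : x \notin s1 by apply/negP => h; have := allP a1 x h; rewrite xB.
  have x2 : x \notin s2 by apply/negP => h; have := allP a2 x h; rewrite !inE eqxx.
  split.
    rewrite cat_uniq u1 /= x2 u2 (negbTE xs1) /= andbT.
    apply/hasPn => y ys; apply/negP => ys1.
    have := allP a1 y ys1; have := allP a2 y ys; by rewrite !inE => /andP[_ ->].
  by rewrite remx_cat // (set_full u1 a1 sz1) setCK eqxx.
Qed.

Lemma mass_D1_pos (R : realType) (X : finType) (q : X -> {set X} -> R) (C : {set X}) z :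
  (forall y B, 0 <= q y B) ->
  (forall B : {set X}, B != set0 -> B != setT -> mass q B = flow q B) ->
  z \in C -> 0 < q z C -> C :\ z = set0 \/ 0 < mass q (C :\ z).
Proof.
move=> q0 mF zC qp.
case: (C :\ z =P set0) => [->|/eqP Cn]; [by left | right].
rewrite mF //; last by apply/negP => /eqP E; have := in_setT z; rewrite -E setD11.
apply: (lt_le_trans qp).
rewrite /flow (bigD1 z) /=; last by rewrite !inE eqxx.
rewrite setD1K // lerDl; apply: sumr_ge0 => *; exact: q0.
Qed.

Lemma repr_B (R : realType) (X : finType) (q : X -> {set X} -> R) (x : X) (B : {set X}) :
  (forall y B, 0 <= q y B) -> mass q setT = 1 ->
  (forall B : {set X}, B != set0 -> B != setT -> mass q B = flow q B) ->
  x \in B ->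
  sumseq #|X| (fun s => if uniq s && (remx s x == B) then chain q setT s else 0) = q x B.
Proof.
move=> q0 mT mF xB.
have B0 : (0 < #|B|)%N by apply/card_gt0P; exists x.
have En : #|X| = (#|~: B| + (#|B|.-1).+1)%N by rewrite prednK // addnC cardsC.
rewrite En sumseq_cat.
transitivity (sumseq #|~: B| (fun s1 =>
  (if uniq s1 && all (fun y => y \notin B) s1 then chain q setT s1 else 0) *
  (q x B / mass q B * sumseq #|B|.-1 (fun s2 =>
     if uniq s2 && all (fun y => y \in B :\ x) s2 then chain q (B :\ x) s2 else 0)))).
  apply: sumseq_ext => s1 sz1.
  transitivity (\sum_z sumseq #|B|.-1 (fun s2 =>
     if uniq (s1 ++ z :: s2) && (remx (s1 ++ z :: s2) x == B)
     then chain q setT (s1 ++ z :: s2) else 0)); first by [].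
  rewrite (bigD1 x) //= big1 ?addr0; last first.
    move=> z zx; transitivity (sumseq #|B|.-1 (fun _ : seq X => 0 : R)); last exact: sumseq_0.
    by apply: sumseq_ext => s2 sz2; rewrite (@split_claim _ s1 s2 z x B xB sz1 sz2) (negbTE zx).
  rewrite -!sumseq_scale.
  apply: sumseq_ext => s2 sz2; rewrite (@split_claim _ s1 s2 x x B xB sz1 sz2) eqxx /=.
  case h1: (uniq s1 && all _ s1); last by rewrite /= mul0r.
  case h2: (uniq s2 && all _ s2); last by rewrite /= !mulr0.
  move/andP: h1 => [u1 a1].
  by rewrite /= chain_cat /= setTD (set_full u1 a1 sz1) setCK.
rewrite sumseq_scaler (reach q0 mT mF) //; last by apply/set0Pn; exists x.
case: (q x B =P 0) => [->|qn]; first by rewrite !mul0r mulr0.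
have qp : 0 < q x B by rewrite lt_def q0 andbT; apply/eqP.
rewrite (completion q0 mF); last first.
- exact: mass_D1_pos.
- by move: (cardsD1 x B); rewrite xB add1n => ->.
by rewrite mulr1 mul_divK // mass_ge.
Qed.

Lemma repr_full (R : realType) (X : finType) (q : X -> {set X} -> R) (x : X) (A : {set X}) :
  (forall y B, 0 <= q y B) -> mass q setT = 1 ->
  (forall B : {set X}, B != set0 -> B != setT -> mass q B = flow q B) ->
  x \in A ->
  sumseq #|X| (fun s => if uniq s && (A \subset remx s x) then chain q setT s else 0)
  = \sum_(B : {set X} | A \subset B) q x B.
Proof.
move=> q0 mT mF xA.
transitivity (sumseq #|X| (fun s => \sum_(B : {set X} | A \subset B)
   (if uniq s && (remx s x == B) then chain q setT s else 0))).
  apply: sumseq_ext => s _.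
  case us: (uniq s) => /=; last by rewrite big1.
  case h: (A \subset remx s x).
    rewrite (bigD1 (remx s x)) //= eqxx big1 ?addr0 // => B /andP[_ /negbTE].
    by rewrite eq_sym => ->.
  rewrite big1 // => B HAB; case: eqP => // E; by move: h; rewrite E HAB.
rewrite sumseq_sum; apply: eq_bigr => B HAB; apply: repr_B => //.
exact: (subsetP HAB x xA).
Qed.


Lemma o0_inj (X : finType) : injectiveb [ffun y : X => enum_rank y].
Proof. apply/injectiveP => y z; rewrite !ffunE; exact: enum_rank_inj. Qed.

Definition o0 (X : finType) : linord X := exist (fun f : {ffun X -> 'I_#|X|} => injectiveb f) _ (o0_inj X).

Definition oinv (X : finType) (o : linord X) (i : 'I_#|X|) : X :=
  odflt (enum_val i) [pick y | val o y == i].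

Definition tup_of (X : finType) (o : linord X) : #|X|.-tuple X :=
  map_tuple (oinv o) (ord_tuple #|X|).

Lemma oinvK (X : finType) (o : linord X) i : val o (oinv o i) = i.
Proof.
rewrite /oinv; case: pickP => [y /eqP //|H] /=.
have inj : injective (val o) by apply/injectiveP; exact: (valP o).
have := @inj_card_onto _ _ _ inj; rewrite card_ord => /(_ (leqnn _) i).
case/codomP => y Ey; by move: (H y); rewrite -Ey eqxx.
Qed.

Lemma linord_inj (X : finType) (o : linord X) : injective (val o).
Proof. apply/injectiveP; exact: (valP o). Qed.

Lemma oinv_rank (X : finType) (o : linord X) y : oinv o (val o y) = y.
Proof. apply: (@linord_inj _ o); by rewrite oinvK. Qed.

Lemma oinv_inj (X : finType) (o : linord X) : injective (oinv o).
Proof. move=> i j E; by rewrite -(oinvK o i) -(oinvK o j) E. Qed.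

Lemma index_tup (X : finType) (o : linord X) y : index y (tup_of o) = val o y.
Proof.
rewrite /tup_of /= -{1}(oinv_rank o y) index_map; last exact: oinv_inj.
by rewrite index_enum_ord.
Qed.

Lemma uniq_tup (X : finType) (o : linord X) : uniq (tup_of o).
Proof.
rewrite /tup_of /= map_inj_uniq ?val_ord_tuple ?enum_uniq //; exact: oinv_inj.
Qed.

Lemma inN_remx (X : finType) (o : linord X) x (A : {set X}) :
  inN o x A = (A \subset remx (tup_of o) x).
Proof.
apply/forallP/subsetP => [H y yA|H y].
  move: (H y); rewrite yA /= /prefers inE !index_tup.
  case: (eqVneq y x) => [->|yx] /=; first by rewrite leqnn.
  by move/ltnW.
apply/implyP => yA; apply/implyP => yx.
move: (H y yA); rewrite inE !index_tup /prefers leq_eqVlt => /orP[/eqP E|//].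
by move: yx; rewrite (linord_inj (val_inj E)) eqxx.
Qed.

Definition ofseq (X : finType) (t : seq X) : linord X :=
  odflt (o0 X) (insub [ffun y => insubd (enum_rank y) (index y t)]).

Lemma ofseq_tup (X : finType) (o : linord X) : ofseq (tup_of o) = o.
Proof.
rewrite /ofseq.
have -> : [ffun y => insubd (enum_rank y) (index y (tup_of o))] = val o.
  apply/ffunP => y; rewrite ffunE index_tup; apply: val_inj; rewrite insubdK //; apply: ltn_ord.
case: o => f fi /=; case: insubP => [u _ Eu | /negP //] /=; apply: val_inj; by rewrite /= Eu.
Qed.

Lemma tup_ofseq (X : finType) (t : #|X|.-tuple X) : uniq t -> tup_of (ofseq t) = t.
Proof.
move=> ut.
have sz : size t = #|X| by rewrite size_tuple.
have E : forall y, val ([ffun y => insubd (enum_rank y) (index y t)] y) = index y t.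
  move=> y; rewrite ffunE insubdK //; have h := full_mem y ut sz; rewrite -index_mem sz in h; exact: h.
have inj : injectiveb [ffun y => insubd (enum_rank y) (index y t)].
  apply/injectiveP => y z /(congr1 val); rewrite !E => Hi.
  by rewrite -(nth_index y (full_mem y ut sz)) Hi nth_index // full_mem.
rewrite /ofseq insubT /=.
apply: eq_from_tnth => i; rewrite /tup_of tnth_map tnth_ord_tuple.
set o : linord X := exist (fun f : {ffun X -> 'I_#|X|} => injectiveb f) _ inj.
change (oinv o i = tnth t i).
apply: (@linord_inj _ o); rewrite oinvK; apply: val_inj.
have -> : val o (tnth t i) = [ffun y => insubd (enum_rank y) (index y t)] (tnth t i) by [].
by rewrite E (tnth_nth (tnth t i)) index_uniq ?sz.
Qed.

Lemma sum_linord (R : realType) (X : finType) (G : seq X -> R) :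
  \sum_(o : linord X) G (tup_of o) = sumseq #|X| (fun s => if uniq s then G s else 0).
Proof.
rewrite -(tuple_sumseqP #|X| (fun s : seq X => uniq s) G).
symmetry; rewrite (reindex (@tup_of X)) /=.
  by apply: eq_bigl => o; rewrite uniq_tup.
exists (@ofseq X) => [o _|t]; first exact: ofseq_tup.
rewrite inE; exact: tup_ofseq.
Qed.

Definition fmu (R : realType) (X : finType) (q : X -> {set X} -> R) (o : linord X) : R :=
  chain q setT (tup_of o).

Lemma chain_ge0 (R : realType) (X : finType) (q : X -> {set X} -> R) C s :
  (forall y B, 0 <= q y B) -> 0 <= chain q C s.
Proof.
move=> q0; elim: s C => [|z s IH] C /=; first exact: ler01.
apply: mulr_ge0 => //; apply: divr_ge0 => //; rewrite /mass; apply: sumr_ge0 => *; exact: q0.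
Qed.

Lemma falmagne (R : realType) (X : finType) (rho q : X -> {set X} -> R) (x0 : X) :
  (forall A : {set X}, A != set0 -> \sum_(x in A) rho x A = 1) ->
  (forall x (A : {set X}), x \in A -> rho x A = \sum_(B : {set X} | A \subset B) q x B) ->
  (forall y B, 0 <= q y B) ->
  is_dist (fmu q) /\ (forall x (A : {set X}), x \in A -> \sum_(o | inN o x A) fmu q o = rho x A).
Proof.
move=> Hs Hq q0.
have [mT mF] := flow_id x0 Hs Hq.
have rep : forall x (A : {set X}), x \in A -> \sum_(o | inN o x A) fmu q o = rho x A.
  move=> x A xA; rewrite (Hq x A xA) -(repr_full q0 mT mF xA) big_mkcond /=.
  under eq_bigr do rewrite inN_remx.
  rewrite (sum_linord (fun s => if A \subset remx s x then chain q setT s else 0)).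
  by apply: sumseq_ext => s _; case: (uniq s).
split=> //; split; first by move=> o; exact: chain_ge0.
have := rep x0 [set x0] (set11 x0).
rewrite (eq_bigl xpredT); last first.
  move=> o; apply/forallP => y; apply/implyP; rewrite inE => /eqP ->; by rewrite eqxx.
move=> ->; have := Hs [set x0]; rewrite big_set1; apply.
by apply/set0Pn; exists x0; rewrite set11.
Qed.


Lemma all2_rcons (A B : Type) (r : A -> B -> bool) s t x y :
  all2 r (rcons s x) (rcons t y) = all2 r s t && r x y.
Proof.
elim: s t => [|a s IH] [|b t] /=.
- by rewrite andbT.
- by case: t => [|c t] /=; rewrite andbF.
- by case: s {IH} => [|c s] /=; rewrite andbF.
- by rewrite IH andbA.
Qed.

Lemma in_dom_rcons (X : finType) n (xs : seq X) As x (A : {set X}) :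
  in_dom n.+1 (rcons xs x) (rcons As A) = in_dom n xs As && (x \in A).
Proof.
rewrite /in_dom !size_rcons !eqSS all_rcons all2_rcons.
case xA: (x \in A); last by rewrite !andbF.
have -> : A != set0 by apply/set0Pn; exists x.
by rewrite !andbT.
Qed.

Lemma in_dom_size (X : finType) n (xs : seq X) As :
  in_dom n xs As -> size xs = n /\ size As = n.
Proof. by case/and4P => /eqP -> /eqP ->. Qed.

Lemma in_dom0 (X : finType) (xs : seq X) As : in_dom 0 xs As -> xs = [::] /\ As = [::].
Proof. by case/in_dom_size; case: xs => //; case: As. Qed.

Lemma pext_sumseq (R : realType) (X : finType) (p : seq X -> seq {set X} -> R) k zs As :
  pext p k zs As = sumseq k (fun ys => p (zs ++ ys) (As ++ nseq k setT)).
Proof.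
elim: k zs As => [|k IH] zs As /=; first by rewrite !cats0.
apply: eq_bigr => y _; rewrite IH; apply: sumseq_ext => ys _.
by rewrite -!cats1 -!catA.
Qed.

Lemma pext_ge0 (R : realType) (X : finType) (f : seq X -> seq {set X} -> R) T :
  (exists x0 : X, True) ->
  (forall xs As, in_dom T xs As -> 0 <= f xs As) ->
  forall k zs As, (k <= T)%N -> in_dom (T - k) zs As -> 0 <= pext f k zs As.
Proof.
move=> [x0 _] H; elim=> [|k IH] zs As kT D /=; first by apply: H; rewrite subn0 in D.
apply: sumr_ge0 => y _; apply: IH; first exact: ltnW.
have -> : (T - k = (T - k.+1).+1)%N by lia.
by rewrite in_dom_rcons D in_setT.
Qed.

Lemma all2_setT (X : finType) (s : seq X) :
  all2 (fun (x : X) (A : {set X}) => x \in A) s (nseq (size s) setT).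
Proof. by elim: s => //= a s ->; rewrite in_setT. Qed.

Lemma all_setT (X : finType) (x0 : X) n : all (fun A : {set X} => A != set0) (nseq n setT).
Proof.
elim: n => //= n ->; rewrite andbT; apply/set0Pn; by exists x0.
Qed.

Lemma top_sum (R : realType) (X : finType) (B : {set X}) (g : linord X -> R) :
  B != set0 -> \sum_(y in B) \sum_(o | inN o y B) g o = \sum_o g o.
Proof.
move=> /set0Pn [y0 y0B].
under eq_bigr do rewrite big_mkcond.
rewrite exchange_big; apply: eq_bigr => o _ /=.
have [ytop ytB ymin] : exists2 y, y \in B & (forall z, z \in B -> (val (val o y) <= val (val o z))%N).
  case: (@arg_minnP _ y0 (mem B) (fun y => nat_of_ord (val o y)) y0B) => y yB H; by exists y.
have topN : inN o ytop B.
  apply/forallP => z; apply/implyP => zB; apply/implyP => zy.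
  rewrite /prefers ltn_neqAle ymin // andbT.
  apply: contra zy => /eqP E; apply/eqP; apply: (@linord_inj _ o); exact: val_inj.
rewrite (bigD1 ytop) //= topN big1 ?addr0 // => z /andP[zB zy].
case: ifP => // zN.
move/forallP: topN => /(_ z); rewrite zB zy /= => h1.
move/forallP: zN => /(_ ytop); rewrite ytB eq_sym zy /= => h2.
by move: h1 h2; rewrite /prefers => h1; rewrite ltnNge (ltnW h1).
Qed.

Lemma sicdru_bridge (R : realType) (X : finType) (T : nat) (f : nat -> linord X -> R)
  (xs : seq X) (As : seq {set X}) (x0 : X) :
  size xs = T -> size As = T ->
  \sum_(os : T.-tuple (linord X) |
          all (fun t => inN t.2 t.1.1 t.1.2) (zip (zip xs As) os))
     \prod_(i < T) f i (tnth os i)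
  = \prod_(i < T) \sum_(o | inN o (nth x0 xs i) (nth set0 As i)) f i o.
Proof.
move=> sx sA.
rewrite (eq_bigr (fun os : T.-tuple (linord X) => \prod_(i < T) f i (nth (o0 X) os i)));
  last by move=> os _; apply: eq_bigr => i _; rewrite (tnth_nth (o0 X)).
rewrite (tuple_sumseqP T (fun os : seq (linord X) =>
   all (fun t => inN t.2 t.1.1 t.1.2) (zip (zip xs As) os))
   (fun os => \prod_(i < T) f i (nth (o0 X) os i))).
rewrite -(sumseq_prod (o0 X) T (fun i o => inN o (nth x0 xs i) (nth set0 As i)) f).
apply: sumseq_ext => os sz.
rewrite prod_if; congr (if _ then _ else _).
have szz : size (zip (zip xs As) os) = T by rewrite !size_zip sx sA sz !minnn.
apply/(all_nthP ((x0, set0), o0 X))/forallP => [H i | H i Hi].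
  have := H i; rewrite szz ltn_ord => /(_ isT).
  by rewrite nth_zip ?size_zip ?sx ?sA ?sz ?minnn //= nth_zip ?sx ?sA.
rewrite szz in Hi; have := H (Ordinal Hi) => /=.
by rewrite nth_zip ?size_zip ?sx ?sA ?sz ?minnn //= nth_zip ?sx ?sA.
Qed.


Definition Wf (R : realType) (X : finType) (f : nat -> seq X -> linord X -> R) (x0 : X)
  (xs : seq X) (As : seq {set X}) (i : nat) : R :=
  \sum_(o | inN o (nth x0 xs i) (nth set0 As i)) f i (take i xs) o.

Lemma Wf_rcons (R : realType) (X : finType) (f : nat -> seq X -> linord X -> R) x0
  (xs : seq X) As y B i :
  size xs = size As -> (i < size xs)%N ->
  Wf f x0 (rcons xs y) (rcons As B) i = Wf f x0 xs As i.
Proof.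
move=> sA ix; rewrite /Wf !nth_rcons -sA ix -cats1 takel_cat //; exact: ltnW.
Qed.

Lemma Wf_last (R : realType) (X : finType) (f : nat -> seq X -> linord X -> R) x0
  (xs : seq X) As y B :
  size xs = size As ->
  Wf f x0 (rcons xs y) (rcons As B) (size xs) = \sum_(o | inN o y B) f (size xs) xs o.
Proof.
move=> sA; rewrite /Wf !nth_rcons -sA ltnn eqxx -cats1 take_size_cat //.
Qed.

Lemma prod_rcons (R : realType) (X : finType) (f : nat -> seq X -> linord X -> R) x0
  (xs : seq X) As y B :
  size xs = size As ->
  \prod_(i < (size xs).+1) Wf f x0 (rcons xs y) (rcons As B) i
  = (\prod_(i < size xs) Wf f x0 xs As i) * \sum_(o | inN o y B) f (size xs) xs o.
Proof.
move=> sA; rewrite big_ord_recr /= Wf_last //; congr (_ * _).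
apply: eq_bigr => i _; exact: Wf_rcons.
Qed.

Lemma nec_pext (R : realType) (X : finType) (T : nat) (p : seq X -> seq {set X} -> R)
  (f : nat -> seq X -> linord X -> R) (x0 : X) :
  (forall n (zs : seq X), (n < T)%N -> size zs = n -> is_dist (f n zs)) ->
  (forall xs As, in_dom T xs As -> p xs As = \prod_(i < T) Wf f x0 xs As i) ->
  forall k xs As, (k <= T)%N -> in_dom (T - k) xs As ->
  pext p k xs As = \prod_(i < T - k) Wf f x0 xs As i.
Proof.
move=> Hd rep; elim=> [|k IH] xs As kT D /=.
  by rewrite subn0 in D *; apply: rep.
have [sx sA] := in_dom_size D.
have E : (T - k = (T - k.+1).+1)%N by lia.
transitivity (\sum_y \prod_(i < (size xs).+1) Wf f x0 (rcons xs y) (rcons As setT) i).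
  apply: eq_bigr => y _; rewrite IH ?sx -?E //; first exact: ltnW.
  by rewrite E in_dom_rcons D in_setT.
have sxA : size xs = size As by rewrite sx sA.
rewrite (eq_bigr (fun y => (\prod_(i < size xs) Wf f x0 xs As i) *
   \sum_(o | inN o y setT) f (size xs) xs o)); last by move=> y _; rewrite prod_rcons.
rewrite -mulr_sumr sx.
have -> : \sum_y \sum_(o | inN o y setT) f (T - k.+1)%N xs o = 1.
  transitivity (\sum_(y in [set: X]) \sum_(o | inN o y setT) f (T - k.+1)%N xs o).
    by apply: eq_bigl => y; rewrite in_setT.
  rewrite top_sum; last by apply/set0Pn; exists x0; rewrite in_setT.
  by case: (Hd (T - k.+1)%N xs _ sx) => //; lia.
by rewrite mulr1.
Qed.

Lemma nec_marg1 (R : realType) (X : finType) (T : nat) (p : seq X -> seq {set X} -> R)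
  (f : nat -> seq X -> linord X -> R) (x0 : X) :
  (forall n (zs : seq X), (n < T)%N -> size zs = n -> is_dist (f n zs)) ->
  (forall xs As, in_dom T xs As -> p xs As = \prod_(i < T) Wf f x0 xs As i) ->
  forall tau xs As (B : {set X}), (tau < T)%N -> in_dom tau xs As -> B != set0 ->
  \sum_(y in B) pmarg p T tau.+1 (rcons xs y) (rcons As B) = \prod_(i < tau) Wf f x0 xs As i.
Proof.
move=> Hd rep tau xs As B tT D B0.
have [sx sA] := in_dom_size D.
transitivity (\sum_(y in B) \prod_(i < (size xs).+1) Wf f x0 (rcons xs y) (rcons As B) i).
  apply: eq_bigr => y yB; rewrite /pmarg (nec_pext Hd rep) ?leq_subr //.
    by have -> : (T - (T - tau.+1) = (size xs).+1)%N by lia.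
  have -> : (T - (T - tau.+1) = tau.+1)%N by lia.
  by rewrite in_dom_rcons D yB.
have sxA : size xs = size As by rewrite sx sA.
rewrite (eq_bigr (fun y => (\prod_(i < size xs) Wf f x0 xs As i) *
   \sum_(o | inN o y B) f (size xs) xs o)); last by move=> y _; rewrite prod_rcons.
rewrite -mulr_sumr top_sum // sx.
by case: (Hd tau xs tT sx) => _ ->; rewrite mulr1.
Qed.


Lemma part_sum (R : realType) (X : finType) (A : {set X}) (L : linord X -> {set X})
  (g : linord X -> R) :
  \sum_(B : {set X} | A \subset B) \sum_(o | L o == B) g o = \sum_(o | A \subset L o) g o.
Proof.
symmetry; rewrite (partition_big L (fun B => A \subset B)) //.
apply: eq_bigr => B HAB; apply: eq_bigl => o.
by case: eqP => [->|]; rewrite ?HAB ?andbF.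
Qed.

Lemma necessity (R : realType) (X : finType) (T : nat) (p : seq X -> seq {set X} -> R) (x0 : X) :
  (1 <= T)%N -> is_rjcr T p -> SICDRU T p ->
  [/\ marginality T p, complete_monotonicity T p & choice_set_independence T p].
Proof.
move=> T1 rj [nu [tr [dnu [dtr rep]]]].
pose f := fun (i : nat) (zs : seq X) (o : linord X) => if i == 0%N then nu o else tr i zs o.
have Hd : forall n (zs : seq X), (n < T)%N -> size zs = n -> is_dist (f n zs).
  move=> n zs nT sz; rewrite /f; case: eqP => [_|/eqP n0]; first exact: dnu.
  apply: dtr => //; apply/andP; split; lia.
have rep' : forall xs As, in_dom T xs As -> p xs As = \prod_(i < T) Wf f x0 xs As i.
  move=> xs As D; have [sx sA] := in_dom_size D.
  by rewrite (rep xs As D) (sicdru_bridge (fun i o => f i (take i xs) o) x0 sx sA).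
have pmE : forall tau xs As, (tau <= T)%N -> in_dom tau xs As ->
    pmarg p T tau xs As = \prod_(i < tau) Wf f x0 xs As i.
  move=> tau xs As tT D; rewrite /pmarg (nec_pext Hd rep') ?leq_subr ?subKn //.
split.
- move=> tau /andP[t1 tT] xs As D B C B0 C0.
  by rewrite !(nec_marg1 Hd rep') //; lia.
- exists (fun xs Bs => \prod_(i < T) \sum_(o | remx (tup_of o) (nth x0 xs i) == nth set0 Bs i)
      f i (take i xs) o).
  split.
  + move=> xs As D; have [sx sA] := in_dom_size D; rewrite rep' //.
    rewrite (tuple_sumseqP T (fun Bs : seq {set X} => all2 (fun A B : {set X} => A \subset B) As Bs)
      (fun Bs => \prod_(i < T) \sum_(o | remx (tup_of o) (nth x0 xs i) == nth set0 Bs i)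
      f i (take i xs) o)).
    transitivity (sumseq T (fun Bs => \prod_(i < T) (if nth set0 As i \subset nth set0 Bs i then
       \sum_(o | remx (tup_of o) (nth x0 xs i) == nth set0 Bs i) f i (take i xs) o else 0)));
      last first.
      apply: sumseq_ext => Bs sz; rewrite prod_if; congr (if _ then _ else _).
      rewrite all2E sA sz eqxx /=.
      apply/forallP/(all_nthP (set0, set0)) => [H i Hi | H i].
        rewrite size_zip sA sz minnn in Hi.
        by rewrite nth_zip ?sA ?sz //=; apply: (H (Ordinal Hi)).
      by have := H i; rewrite size_zip sA sz minnn ltn_ord nth_zip ?sA ?sz //=; apply.
    rewrite (sumseq_prod set0 T (fun i B => nth set0 As i \subset B)
      (fun i B => \sum_(o | remx (tup_of o) (nth x0 xs i) == B) f i (take i xs) o)).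
    apply: eq_bigr => i _; rewrite /Wf part_sum.
    by apply: eq_bigl => o; rewrite inN_remx.
  + move=> xs Bs D; have [sx _] := in_dom_size D.
    apply: prodr_ge0 => i _; apply: sumr_ge0 => o _.
    have st : size (take i xs) = i by rewrite size_takel // sx ltnW.
    have [H _] := Hd i (take i xs) (ltn_ord i) st.
    exact: H.
- move=> tau /andP[t1 tT] B y yB xs As As' D D' P1 P2.
  have key : forall As0, in_dom tau xs As0 -> 0 < pmarg p T tau xs As0 ->
      pmarg p T tau.+1 (rcons xs y) (rcons As0 B) / pmarg p T tau xs As0
      = \sum_(o | inN o y B) f tau xs o.
    move=> As0 D0 P0; have [sx sA] := in_dom_size D0.
    have tT' : (tau < T)%N by lia.
    have E1 := pmE tau xs As0 (ltnW tT') D0.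
    rewrite (pmE tau.+1) //; last by rewrite in_dom_rcons D0 yB.
    have PR := @prod_rcons _ _ f x0 xs As0 y B (etrans sx (esym sA)).
    rewrite sx in PR; rewrite PR -E1 [X in X / _]mulrC mulfK //; by rewrite gt_eqF.
  by rewrite !key.
Qed.


Lemma in_dom_cons (X : finType) n (xs : seq X) As x (A : {set X}) :
  in_dom n.+1 (x :: xs) (A :: As) = in_dom n xs As && (x \in A).
Proof.
rewrite /in_dom /= !eqSS.
case xA: (x \in A); last by rewrite !andbF.
have -> : A != set0 by apply/set0Pn; exists x.
by rewrite /= !andbT.
Qed.

Lemma in_dom_sub (X : finType) n (xs : seq X) As Cs :
  in_dom n xs As -> all2 (fun A B : {set X} => A \subset B) As Cs -> in_dom n xs Cs.
Proof.
elim: xs As Cs n => [|x xs IH] [|A As] [|C Cs] [|n] D //=; try by case: (in_dom_size D).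
move: D; rewrite !in_dom_cons => /andP[D xA] /andP[AC al].
by rewrite (IH _ _ _ D al) (subsetP AC x xA).
Qed.

Definition dlt (R : realType) (X : finType) (o : linord X) : R := (o == o0 X)%:R.

Lemma delta_dist (R : realType) (X : finType) : is_dist (fun o : linord X => dlt R o).
Proof.
split; first by move=> o; rewrite /dlt ler0n.
by rewrite /dlt (sum_indicator R xpredT (o0 X)).
Qed.

Lemma pmarg0 (R : realType) (X : finType) (T : nat) (p : seq X -> seq {set X} -> R) (x0 : X) :
  is_rjcr T p -> pmarg p T 0 [::] [::] = 1.
Proof.
case=> _ rj; rewrite /pmarg subn0 pext_sumseq.
have := rj (nseq T setT) (size_nseq _ _) (all_setT x0 T).
rewrite (tuple_sumseqP T (fun s : seq X => all2 (fun (x : X) (A : {set X}) => x \in A) s (nseq T setT))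
   (fun s => p s (nseq T setT))) => <-.
apply: sumseq_ext => s sz; by rewrite /= -sz all2_setT.
Qed.

Lemma em (R : realType) (X : finType) (T : nat) (p : seq X -> seq {set X} -> R) (x0 : X) :
  (1 <= T)%N -> is_rjcr T p -> marginality T p ->
  forall tau xs As (B : {set X}), (tau < T)%N -> in_dom tau xs As -> B != set0 ->
  \sum_(y in B) pmarg p T tau.+1 (rcons xs y) (rcons As B) = pmarg p T tau xs As.
Proof.
move=> T1 rj M [|tau] xs As B tT D B0.
  have [-> ->] := in_dom0 D; rewrite (pmarg0 x0 rj) /=.
  case: rj => _ rj.
  set n := (T - 1)%N; have ET : T = n.+1 by rewrite /n; lia.
  have H := rj (B :: nseq n setT).
  rewrite /= size_nseq -ET (all_setT x0 n) andbT in H; have := H erefl B0; clear H.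
  rewrite (tuple_sumseqP T (fun s : seq X => all2 (fun (x : X) (A : {set X}) => x \in A) s (B :: nseq n setT))
    (fun s => p s (B :: nseq n setT))) ET /= => <-.
  rewrite [LHS]big_mkcond; apply: eq_bigr => y _.
  rewrite /pmarg subSS subn0 pext_sumseq /=.
  case yB: (y \in B).
    by apply: sumseq_ext => s sz; rewrite /= -sz all2_setT.
  symmetry; transitivity (sumseq n (fun _ : seq X => 0 : R)); last exact: sumseq_0.
  by apply: sumseq_ext.
have [sx sA] := in_dom_size D.
rewrite (M tau.+1 _ xs As D B setT B0); first last.
- by apply/set0Pn; exists x0; rewrite in_setT.
- by apply/andP; split => //; lia.
rewrite /pmarg.
have -> : (T - tau.+1 = (T - tau.+2).+1)%N by lia.
rewrite [RHS]/=; apply: eq_bigl => y; by rewrite in_setT.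
Qed.


Lemma mobius (R : realType) (X : finType) (T : nat) (p q : seq X -> seq {set X} -> R) :
  (forall xs As, in_dom T xs As ->
     p xs As = \sum_(Bs : T.-tuple {set X} | all2 (fun A B : {set X} => A \subset B) As Bs)
                 q xs Bs) ->
  forall k zs As, (k <= T)%N -> in_dom (T - k) zs As ->
  pext p k zs As = sumseq (T - k) (fun Cs =>
     if all2 (fun A B : {set X} => A \subset B) As Cs then pext q k zs Cs else 0).
Proof.
move=> Hq; elim=> [|k IH] zs As kT D.
  rewrite subn0 in D *; rewrite /= Hq //.
  exact: (tuple_sumseqP T (fun Cs : seq {set X} => all2 (fun A B : {set X} => A \subset B) As Cs)
    (fun Cs => q zs Cs)).
have [sz sA] := in_dom_size D.
set n := (T - k.+1)%N; have E : (T - k = n.+1)%N by rewrite /n; lia.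
transitivity (\sum_y sumseq n.+1 (fun Cs =>
     if all2 (fun A B : {set X} => A \subset B) (rcons As setT) Cs
     then pext q k (rcons zs y) Cs else 0)).
  apply: eq_bigr => y _; rewrite -[LHS]/(pext p k (rcons zs y) (rcons As setT)).
  rewrite IH ?E //; first exact: ltnW.
  by rewrite in_dom_rcons D in_setT.
under eq_bigr do rewrite sumseq_rcons.
rewrite -sumseq_sum; apply: sumseq_ext => Cs sC.
case h: (all2 (fun A B : {set X} => A \subset B) As Cs); last first.
  by rewrite big1 // => y _; rewrite big1 // => C _; rewrite all2_rcons h.
rewrite [RHS]/=; apply: eq_bigr => y _.
rewrite (bigD1 setT) //= all2_rcons h subxx big1 ?addr0 // => C CT.
by rewrite all2_rcons h subTset (negbTE CT).
Qed.


Definition qcond (R : realType) (X : finType) (T : nat) (p q : seq X -> seq {set X} -> R)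
  (tau : nat) (xs : seq X) (As : seq {set X}) (y : X) (C : {set X}) : R :=
  if y \in C then
    sumseq tau (fun Cs => if all2 (fun A B : {set X} => A \subset B) As Cs
                          then pext q (T - tau.+1) (rcons xs y) (rcons Cs C) else 0)
    / pmarg p T tau xs As
  else 0.

Lemma pmarg_ge0 (R : realType) (X : finType) (T : nat) (p : seq X -> seq {set X} -> R) (x0 : X) :
  is_rjcr T p -> forall tau xs As, (tau <= T)%N -> in_dom tau xs As -> 0 <= pmarg p T tau xs As.
Proof.
case=> p0 _ tau xs As tT D; rewrite /pmarg.
apply: (pext_ge0 (ex_intro _ x0 I) p0); first exact: leq_subr.
by rewrite subKn.
Qed.

Lemma fal_app (R : realType) (X : finType) (T : nat) (p q : seq X -> seq {set X} -> R) (x0 : X) :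
  (1 <= T)%N -> is_rjcr T p -> marginality T p ->
  (forall xs As, in_dom T xs As ->
     p xs As = \sum_(Bs : T.-tuple {set X} | all2 (fun A B : {set X} => A \subset B) As Bs)
                 q xs Bs) ->
  (forall xs As, in_dom T xs As -> 0 <= q xs As) ->
  forall tau xs As, (tau < T)%N -> in_dom tau xs As -> 0 < pmarg p T tau xs As ->
  is_dist (fmu (qcond T p q tau xs As)) /\
  (forall y (B : {set X}), y \in B -> \sum_(o | inN o y B) fmu (qcond T p q tau xs As) o
     = pmarg p T tau.+1 (rcons xs y) (rcons As B) / pmarg p T tau xs As).
Proof.
move=> T1 rj M Hq q0 tau xs As tT D P0.
apply: (@falmagne R X (fun y B => pmarg p T tau.+1 (rcons xs y) (rcons As B) / pmarg p T tau xs As)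
  (qcond T p q tau xs As) x0).
- move=> B B0; by rewrite -mulr_suml (em x0 T1 rj M tT D B0) divff // gt_eqF.
- move=> y B yB.
  have E1 : pmarg p T tau.+1 (rcons xs y) (rcons As B) =
     \sum_(C : {set X} | B \subset C) sumseq tau (fun Cs =>
        if all2 (fun A B : {set X} => A \subset B) As Cs
        then pext q (T - tau.+1) (rcons xs y) (rcons Cs C) else 0).
    rewrite /pmarg (mobius Hq) ?leq_subr //; last by rewrite subKn // in_dom_rcons D yB.
    rewrite subKn // sumseq_rcons -sumseq_sum; apply: sumseq_ext => Cs sC.
    rewrite [RHS]big_mkcond; apply: eq_bigr => C _; rewrite all2_rcons.
    by case: (B \subset C); case: (all2 _ As Cs).
  rewrite E1 mulr_suml; apply: eq_bigr => C BC; by rewrite /qcond (subsetP BC y yB).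
- move=> y C; rewrite /qcond; case: ifP => yC //; apply: divr_ge0.
    apply: sumseq_ge0 => Cs sC; case: ifP => // al.
    apply: (pext_ge0 (ex_intro _ x0 I) q0); first exact: leq_subr.
    by rewrite subKn // in_dom_rcons (in_dom_sub D al) yC.
  apply: (pmarg_ge0 x0 rj) => //; exact: ltnW.
Qed.


Lemma sufficiency (R : realType) (X : finType) (T : nat) (p : seq X -> seq {set X} -> R) (x0 : X) :
  (1 <= T)%N -> is_rjcr T p -> marginality T p -> complete_monotonicity T p ->
  choice_set_independence T p -> SICDRU T p.
Proof.
move=> T1 rj M [q [Hq q0]] CSI.
pose D := fun (tau : nat) (xs : seq X) =>
  match [pick As : tau.-tuple {set X} | in_dom tau xs As && (0 < pmarg p T tau xs As)] with
  | Some As => fmu (qcond T p q tau xs As)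
  | None => fun o => dlt R o
  end.
have Ddist : forall tau xs, (tau < T)%N -> is_dist (D tau xs).
  move=> tau xs tT; rewrite /D; case: pickP => [As /andP[DA PA]|_].
    exact: (fal_app x0 T1 rj M Hq q0 tT DA PA).1.
  exact: delta_dist.
have main : forall tau, (tau <= T)%N -> forall xs As, in_dom tau xs As ->
    pmarg p T tau xs As = \prod_(i < tau) Wf D x0 xs As i.
  elim=> [|tau IH] tT xs As DA.
    have [-> ->] := in_dom0 DA; by rewrite (pmarg0 x0 rj) big_ord0.
  have [sx sA] := in_dom_size DA.
  move: sx sA DA; case/lastP: xs => [//|xs y] sx; case/lastP: As => [//|As B] sA.
  rewrite in_dom_rcons => /andP[DA yB].
  have [sx' sA'] := in_dom_size DA.
  have PR := @prod_rcons _ _ D x0 xs As y B (etrans sx' (esym sA')).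
  rewrite sx' in PR; rewrite PR -IH //; last exact: ltnW.
  have tT' : (tau < T)%N by [].
  have P0 := pmarg_ge0 x0 rj (ltnW tT') DA.
  case: (eqVneq (pmarg p T tau xs As) 0) => [Z|NZ].
    rewrite Z mul0r.
    have B0 : B != set0 by apply/set0Pn; exists y.
    have S := em x0 T1 rj M tT' DA B0; rewrite Z in S.
    apply: (psumr_eq0P _ S) => // z zB; apply: (pmarg_ge0 x0 rj) => //.
    by rewrite in_dom_rcons DA zB.
  have Ppos : 0 < pmarg p T tau xs As by rewrite lt_def NZ P0.
  rewrite /D; case: pickP => [As' /andP[DA' PA'] | none]; last first.
    have sA2 : size As == tau by rewrite sA'.
    by move: (none (Tuple sA2)); rewrite /= DA Ppos.
  rewrite (fal_app x0 T1 rj M Hq q0 tT' DA' PA').2 //.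
  have E : pmarg p T tau.+1 (rcons xs y) (rcons As' B) / pmarg p T tau xs As'
         = pmarg p T tau.+1 (rcons xs y) (rcons As B) / pmarg p T tau xs As.
    have [t0|tpos] := posnP tau.
      have [_ s1] := in_dom_size DA'; have [_ s2] := in_dom_size DA.
      have e1 : (As' : seq {set X}) = [::] by apply: size0nil; rewrite s1.
      have e2 : As = [::] by apply: size0nil; rewrite s2.
      by rewrite e1 e2.
    apply: CSI => //; apply/andP; split => //; lia.
  by rewrite E mulrC divfK.
exists (D 0%N [::]), D; split; first exact: Ddist.
split.
  move=> n /andP[n1 nT] zs _; apply: Ddist; lia.
move=> xs As DA; have [sx sA] := in_dom_size DA.
have -> : p xs As = pmarg p T T xs As by rewrite /pmarg subnn.
rewrite (main T (leqnn T) xs As DA) /Wf.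
rewrite -(sicdru_bridge (fun i o => D i (take i xs) o) x0 sx sA).
apply: eq_bigr => os _; apply: eq_bigr => i _; case: eqP => // ->; by rewrite take0.
Qed.


Lemma no_dom (X : finType) n (xs : seq X) As :
  (forall x : X, false) -> (1 <= n)%N -> in_dom n xs As -> False.
Proof.
move=> X0 n1 D; have [sx _] := in_dom_size D; clear D.
move: sx; case: xs => [|x s] /= E; first by rewrite -E in n1.
by have := X0 x.
Qed.

Unset Implicit Arguments.

Theorem theorem13 (R : realType) (X : finType) (T : nat)
    (p : seq X -> seq {set X} -> R) :
  (1 <= T)%N -> is_rjcr T p ->
  (SICDRU T p <->
   [/\ marginality T p, complete_monotonicity T p & choice_set_independence T p]).
Proof.
move=> T1 rj.
case: (pickP (fun _ : X => true)) => [x0 _ | X0].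
  split; first exact: necessity x0 T1 rj.
  by case=> M CM CSI; exact: sufficiency x0 T1 rj M CM CSI.
have {}X0 : forall x : X, false by move=> x; have := X0 x.
split=> _.
  split.
  - move=> tau /andP[t1 _] xs As D; exfalso; exact: no_dom X0 t1 D.
  - exists (fun (_ : seq X) (_ : seq {set X}) => 0 : R).
    by split=> xs As D; exfalso; exact: (no_dom X0 T1 D).
  - move=> tau /andP[t1 _] B y yB xs As As' D; exfalso; exact: no_dom X0 t1 D.
exists (fun o => dlt R o), (fun _ _ o => dlt R o); split; first exact: delta_dist.
split; first by move=> *; exact: delta_dist.
move=> xs As D; exfalso; exact: no_dom X0 T1 D.
Qed.
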